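(* Let $N\ge1$, $\psi\in[-\pi,\pi]$, and $(w,a,\theta)\in\widetilde{\mathcal{D}}_N(\psi)$. There exists $\omega_0<0$ such that $M_{\mathrm{e}^{i\omega}}(w,a,\theta)\in\mathcal{D}_N(\psi)$ for every real $\omega$ with $\omega_0\le\omega<0$.
   Context: $P_N=\{1,\dots,N\}$; vectors are functions on $P_N$, $v^{-1}[S]=\{\ell:v_\ell\in S\}$, $\mathrm{Tr}(v,\Lambda):=\sum_{\ell\in\Lambda}v_\ell$. $\mathcal{C}:=\{z:\mathrm{Re}(z)>0\text{ or }z\in i\mathbb{R}_{>0}\}$, $\mathcal{C}^\circ$ the open right half-plane. $\mathbb{D}_N:=\{(w,a,\theta)\in\mathbb{C}\times\mathbb{C}^N\times\mathbb{R}^N:a^{-1}[0]\subseteq\theta^{-1}[\mathbb{R}\smallsetminus\mathbb{Z}]\}$, $\pi(w,a,\theta):=w-\mathrm{Tr}(a,a^{-1}[-\mathcal{C}])$, $M_\beta(w,a,\theta):=(\beta w,\beta a,\theta)$. $\widetilde{\mathcal{D}}_N:=\pi^{-1}[\mathcal{C}]$; $\mathcal{D}_N:=\{(w,a,\theta)\in\mathbb{D}_N:\pi(w,a,\theta)\in\mathcal{C}^\circ,\ a_\ell\notin i\mathbb{R}\smallsetminus\{0\}\ \forall\ell\}$. $\mathcal{D}_N(\psi):=\mathcal{D}_N\cap M_{\mathrm{e}^{i\psi}}^{-1}[\mathcal{D}_N]\cap\bigcap_{0<\mathrm{sgn}(\psi)t<|\psi|}(\pi\circ M_{\mathrm{e}^{it}})^{-1}[\mathcal{C}]$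 (so $\mathcal{D}_N(0)=\mathcal{D}_N$). For $\psi\ne0$, $\widetilde{\mathcal{D}}_N(\psi):=\bigcap_{0\le\mathrm{sgn}(\psi)t\le|\psi|}(\pi\circ M_{\mathrm{e}^{it}})^{-1}[\mathcal{C}]$, and $\widetilde{\mathcal{D}}_N(0):=\widetilde{\mathcal{D}}_N$. *)

(* Defs.v *)
From Stdlib Require Import Reals ZArith List ClassicalEpsilon.
From Coquelicot Require Import Coquelicot.
Open Scope R_scope.

(* Vectors on P_N = {1,...,N} are represented as functions on nat; only the
   values at indices 1 <= l <= N are ever used. *)
Definition inPN (N l : nat) : Prop := (1 <= l <= N)%nat.

Definition inCC (z : C) : Prop := Re z > 0 \/ (Re z = 0 /\ Im z > 0).
Definition inCCo (z : C) : Prop := Re z > 0.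
Definition inNegCC (z : C) : Prop := inCC (Copp z).

Definition in_iR_nonzero (z : C) : Prop := Re z = 0 /\ z <> RtoC 0.

Definition notInteger (x : R) : Prop := forall k : Z, x <> IZR k.

Definition triple : Type := (C * (nat -> C) * (nat -> R))%type.

(* Tr(v, Lambda) with Lambda = {l in P_N | P (v l)} *)
Fixpoint sum_upto (n : nat) (f : nat -> C) : C :=
  match n with
  | O => RtoC 0
  | S m => Cplus (sum_upto m f) (f n)
  end.

Definition Tr_filter (N : nat) (P : C -> Prop) (v : nat -> C) : C :=
  sum_upto N (fun l => if excluded_middle_informative (P (v l)) then v l else RtoC 0).

Definition bbD (N : nat) (x : triple) : Prop :=
  let '(w, a, th) := x in
  forall l, inPN N l -> a l = RtoC 0 -> notInteger (th l).

Definition piD (N : nat) (x : triple) : C :=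
  let '(w, a, th) := x in Cminus w (Tr_filter N inNegCC a).

Definition Mb (beta : C) (x : triple) : triple :=
  let '(w, a, th) := x in (Cmult beta w, fun l => Cmult beta (a l), th).

Definition expi (t : R) : C := (cos t, sin t).

Definition sgn (x : R) : R := if Rlt_dec 0 x then 1 else if Rlt_dec x 0 then -1 else 0.

Definition tDN (N : nat) (x : triple) : Prop := bbD N x /\ inCC (piD N x).

Definition DN (N : nat) (x : triple) : Prop :=
  bbD N x /\ inCCo (piD N x) /\
  (let '(w, a, th) := x in forall l, inPN N l -> ~ in_iR_nonzero (a l)).

Definition DNpsi (N : nat) (psi : R) (x : triple) : Prop :=
  DN N x /\ DN N (Mb (expi psi) x) /\
  (forall t, 0 < sgn psi * t < Rabs psi -> bbD N (Mb (expi t) x) /\ inCC (piD N (Mb (expi t) x))).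

Definition tDNpsi (N : nat) (psi : R) (x : triple) : Prop :=
  if Req_EM_T psi 0 then tDN N x
  else forall t, 0 <= sgn psi * t <= Rabs psi ->
         bbD N (Mb (expi t) x) /\ inCC (piD N (Mb (expi t) x)).

(* Main.v *)
Require Import Defs.
From Stdlib Require Import Reals Lra Lia FunctionalExtensionality ClassicalEpsilon.
From Coquelicot Require Import Coquelicot.
Open Scope R_scope.

Lemma key (u v : R) : u > 0 -> exists d, d > 0 /\ forall s, -d <= s <= 0 -> cos s * u - sin s * v > 0.
Proof.
  intros Hu.
  assert (Hc : continuity_pt (fun s => cos s * u - sin s * v) 0).
  { apply continuity_pt_minus; apply continuity_pt_mult;
    first [apply continuity_cos | apply continuity_sin | (apply continuity_pt_const; intros ??; reflexivity)]. }
  unfold continuity_pt, continue_in, limit1_in, limit_in in Hc. simpl in Hc.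
  destruct (Hc u Hu) as [alp [Halp H']].
  exists (alp/2). split; [lra|]. intros s Hs.
  destruct (Req_dec s 0) as [->|Hs0].
  { rewrite cos_0, sin_0. lra. }
  assert (Hd : R_dist (cos s * u - sin s * v) (cos 0 * u - sin 0 * v) < u).
  { apply H'. split. unfold D_x, no_cond. split; auto. unfold R_dist. rewrite Rabs_left1; lra. }
  rewrite cos_0, sin_0 in Hd. unfold R_dist in Hd.
  apply Rabs_def2 in Hd. lra.
Qed.

Lemma sin_neg_small s : -1 <= s < 0 -> sin s < 0.
Proof. intros H. apply sin_lt_0_var; pose proof PI2_1; lra. Qed.

Lemma RePos (u v : R) : inCC (u, v) ->
  exists d, d > 0 /\ forall s, -d <= s < 0 -> cos s * u - sin s * v > 0.
Proof.
  unfold inCC; simpl. intros [H|[H1 H2]].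
  - destruct (key u v H) as [d [Hd H']]. exists d; split; auto. intros s Hs; apply H'; lra.
  - exists 1; split; [lra|]. intros s Hs. subst u. pose proof (sin_neg_small s Hs). nra.
Qed.

Lemma C_ext (z1 z2 : C) : fst z1 = fst z2 -> snd z1 = snd z2 -> z1 = z2.
Proof. destruct z1, z2; simpl; intros; subst; auto. Qed.

Lemma per_l (a : C) : exists d, d > 0 /\ forall s, -d <= s < 0 ->
  (inNegCC (Cmult (expi s) a) <-> inNegCC a) /\ ~ in_iR_nonzero (Cmult (expi s) a).
Proof.
  destruct a as [u v]. unfold inNegCC, inCC, in_iR_nonzero, expi, Cmult, Copp, Re, Im; simpl.
  destruct (Rtotal_order u 0) as [Hu|[Hu|Hu]].
  - destruct (key (-u) (-v)) as [d [Hd H']]; [lra|]. exists d; split; auto.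
    intros s Hs. specialize (H' s ltac:(lra)). split.
    + split; intros _; left; lra.
    + intros [H _]. lra.
  - subst u. exists 1; split; [lra|]. intros s Hs. pose proof (sin_neg_small s Hs).
    destruct (Rtotal_order v 0) as [Hv|[Hv|Hv]].
    + split.
      * split; intros _; [right; split; lra | left; nra].
      * intros [H0 _]. nra.
    + subst v. assert (E : (cos s * 0 - sin s * 0, cos s * 0 + sin s * 0) = (0,0)) by (apply C_ext; simpl; ring).
      split; [split; intros [H0|[H0 H1]]; lra | intros [_ H0]; apply H0; rewrite E; reflexivity].
    + split.
      * split; intros [H0|[H0 H1]]; lra || nra.
      * intros [H0 _]. nra.
  - destruct (key u v) as [d [Hd H']]; [lra|]. exists d; split; auto.
    intros s Hs. specialize (H' s ltac:(lra)). split.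
    + split; intros [H0|[H0 H1]]; lra.
    + intros [H _]. lra.
Qed.

Lemma finite_delta (Q : nat -> R -> Prop) (n : nat) :
  (forall l, exists d, d > 0 /\ forall s, -d <= s < 0 -> Q l s) ->
  exists d, d > 0 /\ forall s, -d <= s < 0 -> forall l, (l <= n)%nat -> Q l s.
Proof.
  intros H. induction n as [|n IH].
  - destruct (H 0%nat) as [d [Hd H']]. exists d; split; auto. intros s Hs l Hl.
    assert (l = 0%nat) by lia. subst; auto.
  - destruct IH as [d1 [Hd1 H1]]. destruct (H (S n)) as [d2 [Hd2 H2]].
    exists (Rmin d1 d2). split. { apply Rmin_glb_lt; auto. }
    intros s Hs l Hl. pose proof (Rmin_l d1 d2). pose proof (Rmin_r d1 d2).
    destruct (Nat.eq_dec l (S n)) as [->|Hne].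
    + apply H2; lra.
    + apply H1; [lra | lia].
Qed.

Lemma sum_lemma (P : C -> Prop) (e : C) (v : nat -> C) (n : nat) :
  (forall l, (l <= n)%nat -> (P (Cmult e (v l)) <-> P (v l))) ->
  sum_upto n (fun l => if excluded_middle_informative (P (Cmult e (v l))) then Cmult e (v l) else RtoC 0)
  = Cmult e (sum_upto n (fun l => if excluded_middle_informative (P (v l)) then v l else RtoC 0)).
Proof.
  induction n as [|n IH]; intros H; simpl.
  - apply C_ext; simpl; ring.
  - rewrite IH by (intros; apply H; lia). rewrite Cmult_plus_distr_l. f_equal.
    specialize (H (S n) (le_n _)).
    destruct (excluded_middle_informative (P (Cmult e (v (S n))))), (excluded_middle_informative (P (v (S n))));
      try tauto. apply C_ext; simpl; ring.
Qed.

Lemma core (N : nat) (y : triple) : inCC (piD N y) ->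
  exists d, d > 0 /\ forall s, -d <= s < 0 ->
   inCCo (piD N (Mb (expi s) y)) /\
   (let '(w, a, th) := Mb (expi s) y in forall l, inPN N l -> ~ in_iR_nonzero (a l)).
Proof.
  destruct y as [[w a] th]. intros Hp.
  destruct (finite_delta (fun l s => (inNegCC (Cmult (expi s) (a l)) <-> inNegCC (a l)) /\ ~ in_iR_nonzero (Cmult (expi s) (a l))) N)
    as [d1 [Hd1 H1]]. { intros l; apply per_l. }
  remember (piD N (w, a, th)) as p eqn:Ep. destruct p as [p1 p2].
  destruct (RePos p1 p2 Hp) as [d2 [Hd2 H2]].
  exists (Rmin d1 d2). split. { apply Rmin_glb_lt; auto. }
  intros s Hs. pose proof (Rmin_l d1 d2). pose proof (Rmin_r d1 d2).
  assert (Hs1 : -d1 <= s < 0) by lra. assert (Hs2 : -d2 <= s < 0) by lra.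
  split.
  - assert (E : piD N (Mb (expi s) (w, a, th)) = Cmult (expi s) (p1, p2)).
    { rewrite Ep. simpl. unfold Tr_filter. rewrite sum_lemma.
      - unfold Cminus. apply C_ext; simpl; ring.
      - intros l Hl. apply (H1 s Hs1 l Hl). }
    rewrite E. unfold inCCo, expi, Re; simpl. apply H2; auto.
  - simpl. intros l Hl. apply (H1 s Hs1 l). unfold inPN in Hl; lia.
Qed.

Lemma expi_mul s t : Cmult (expi s) (expi t) = expi (s + t).
Proof. unfold expi; apply C_ext; simpl; rewrite ?cos_plus, ?sin_plus; ring. Qed.

Lemma Mb_Mb b c x : Mb b (Mb c x) = Mb (Cmult b c) x.
Proof.
  destruct x as [[w a] th]. simpl. f_equal. f_equal. apply Cmult_assoc.
  apply functional_extensionality; intros l. apply Cmult_assoc.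
Qed.

Lemma MbMb s t x : Mb (expi s) (Mb (expi t) x) = Mb (expi (s + t)) x.
Proof. rewrite Mb_Mb, expi_mul; auto. Qed.

Lemma Mb0 x : Mb (expi 0) x = x.
Proof.
  destruct x as [[w a] th]. unfold Mb, expi. rewrite cos_0, sin_0. f_equal. f_equal.
  - apply C_ext; simpl; ring.
  - apply functional_extensionality; intros l. apply C_ext; simpl; ring.
Qed.

Lemma expi_cancel t z : Cmult (expi (-t)) (Cmult (expi t) z) = z.
Proof.
  rewrite Cmult_assoc, expi_mul. replace (-t + t) with 0 by ring.
  unfold expi. rewrite cos_0, sin_0. apply C_ext; simpl; ring.
Qed.

Lemma bbD_Mb N t x : bbD N x <-> bbD N (Mb (expi t) x).
Proof.
  destruct x as [[w a] th]. simpl. split; intros H l Hl Ha; apply H; auto.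
  - rewrite <- (expi_cancel t (a l)), Ha. apply C_ext; simpl; ring.
  - rewrite Ha. apply C_ext; simpl; ring.
Qed.

Lemma sgn_self p : sgn p * p = Rabs p.
Proof.
  unfold sgn. destruct (Rlt_dec 0 p).
  - rewrite Rabs_right by lra. ring.
  - destruct (Rlt_dec p 0).
    + rewrite Rabs_left by lra. ring.
    + assert (p = 0) by lra. subst. rewrite Rabs_R0. ring.
Qed.

Lemma CCo_CC z : inCCo z -> inCC z.
Proof. unfold inCCo, inCC; auto. Qed.

Theorem lemma7 (N : nat) (psi : R) (x : triple) :
  (1 <= N)%nat -> -PI <= psi <= PI -> tDNpsi N psi x ->
  exists omega0 : R, omega0 < 0 /\
    forall omega : R, omega0 <= omega < 0 -> DNpsi N psi (Mb (expi omega) x).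
Proof.
  intros HN Hpsi H. unfold tDNpsi in H.
  assert (F0 : bbD N x /\ inCC (piD N x)).
  { destruct (Req_EM_T psi 0); [exact H|].
    rewrite <- (Mb0 x). apply H. rewrite Rmult_0_r. split; [lra|apply Rabs_pos]. }
  assert (Fp : inCC (piD N (Mb (expi psi) x))).
  { destruct (Req_EM_T psi 0) as [->|Hn]; [rewrite Mb0; apply H|].
    apply H. rewrite sgn_self. split; [apply Rabs_pos|lra]. }
  destruct F0 as [Fb Fc].
  destruct (core N x Fc) as [d1 [Hd1 C1]].
  destruct (core N _ Fp) as [d2 [Hd2 C2]].
  exists (- Rmin d1 d2). split. { pose proof (Rmin_glb_lt d1 d2 0 Hd1 Hd2). lra. }
  intros om Hom. pose proof (Rmin_l d1 d2). pose proof (Rmin_r d1 d2).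
  assert (Ho1 : -d1 <= om < 0) by lra. assert (Ho2 : -d2 <= om < 0) by lra.
  unfold DNpsi, DN. split; [|split].
  - split; [apply bbD_Mb; auto|]. apply C1; auto.
  - rewrite MbMb. split; [apply bbD_Mb; auto|].
    replace (psi + om) with (om + psi) by ring. rewrite <- MbMb. apply C2; auto.
  - intros t Ht. rewrite MbMb. split; [apply bbD_Mb; auto|].
    unfold sgn in Ht. destruct (Rlt_dec 0 psi) as [Hpos|Hnp].
    + rewrite Rabs_right in Ht by lra.
      destruct (Rle_lt_dec 0 (t + om)).
      * destruct (Req_EM_T psi 0); [lra|]. apply H. unfold sgn.
        destruct (Rlt_dec 0 psi); [|lra]. rewrite Rabs_right by lra. split; lra.
      * apply CCo_CC, C1. lra.
    + destruct (Rlt_dec psi 0) as [Hneg|]; [|lra].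
      rewrite Rabs_left in Ht by lra.
      destruct (Rle_lt_dec psi (t + om)).
      * destruct (Req_EM_T psi 0); [lra|]. apply H. unfold sgn.
        destruct (Rlt_dec 0 psi); [lra|]. destruct (Rlt_dec psi 0); [|lra].
        rewrite Rabs_left by lra. split; lra.
      * replace (t + om) with ((t + om - psi) + psi) by ring. rewrite <- MbMb.
        apply CCo_CC, C2. lra.
Qed.
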